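(* There is a universal constant $K_2>0$ such that for all $\alpha_m>0$, $\theta\in(0,1)$ and $h,\alpha_s,\eta>0$, \[ E^{1D}_{h,\alpha_s,\eta,\theta}\le \min\left(\alpha_m\eta^2,\ \alpha_m\eta^2\theta+K_2\frac{h^2\eta}{1-\theta}\right)h . \] The first bound is attained by $u=w=0$; the second by taking $u=w=0$ on a bonded interval of length $\theta$ and a single blister with zero value of $|w_x+\frac12u_x^2-\eta|$ on the complementary interval of length $1-\theta$.
   Context: Let $\mathbb T^1=\mathbb R/\mathbb Z$. Fix parameters $\alpha_m>0$, $h>0$, $\alpha_s>0$, $\eta>0$ and $\theta\in(0,1)$. The admissible class $\mathcal A^{1D}$ consists of triples $(w,u,\Omega)$ with $w\in H^1(\mathbb T^1;\mathbb R)$, $u\in H^2(\mathbb T^1;[0,\infty))$, $\Omega\subset\mathbb T^1$ closed with Lebesgue measure $|\Omega|=\theta$, and $u=0$ on $\Omega$. The energy is \[ E^{1D}[w,u,\Omega]=\alpha_m h\int_0^1\Big|w_x+\tfrac12 u_x^2-\eta\Big|^2dx+h^3\int_0^1|u_{xx}|^2dx+\alpha_s\Big(\int_\Omega|w_x|^2dx\Big)^{1/2}\Big(\int_\Omega|w|^2dx\Big)^{1/2}, \] and $E^{1D}_{h,\alpha_s,\eta,\theta}:=\inf_{(w,u,\Omega)\in\mathcal A^{1D}}E^{1D}[w,u,\Omega]$. *)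

(* Defs.v *)
From Stdlib Require Import Reals Lra ClassicalEpsilon.
Open Scope R_scope.

(* Functions on T^1 = R/Z are represented as 1-periodic functions R -> R;
   subsets of T^1 as 1-periodic predicates on R. *)
Definition periodic1 (f : R -> R) : Prop := forall x, f (x + 1) = f x.
Definition periodic1_set (S : R -> Prop) : Prop := forall x, S (x + 1) <-> S x.

(* closed subset of R (hence, if 1-periodic, a closed subset of T^1) *)
Definition closed_set (S : R -> Prop) : Prop :=
  forall x, ~ S x -> exists d, 0 < d /\ forall y, Rabs (y - x) < d -> ~ S y.

Definition indic (S : R -> Prop) (x : R) : R :=
  if excluded_middle_informative (S x) then 1 else 0.

Definition int01 (f : R -> R) (I : R) : Prop :=
  exists pr : Riemann_integrable f 0 1, RiemannInt pr = I.

(* Admissible triples (regular subclass of A^{1D}):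
   w is C^1 and 1-periodic with derivative wx;
   u is C^2, 1-periodic and nonnegative with derivatives ux, uxx;
   Omega is a closed 1-periodic set whose measure (Riemann/Jordan integral of
   its indicator over one period) is theta; u = 0 on Omega. *)
Definition admissible (theta : R) (w wx u ux uxx : R -> R) (Om : R -> Prop) : Prop :=
  periodic1 w /\ periodic1 u /\
  (forall x, derivable_pt_lim w x (wx x)) /\ continuity wx /\
  (forall x, derivable_pt_lim u x (ux x)) /\
  (forall x, derivable_pt_lim ux x (uxx x)) /\ continuity uxx /\
  (forall x, 0 <= u x) /\
  periodic1_set Om /\ closed_set Om /\ int01 (indic Om) theta /\
  (forall x, Om x -> u x = 0).

Definition energy_value (am h as_ eta : R) (w wx u ux uxx : R -> R)
    (Om : R -> Prop) (E : R) : Prop :=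
  exists I1 I2 I3 I4,
    int01 (fun x => Rsqr (wx x + / 2 * Rsqr (ux x) - eta)) I1 /\
    int01 (fun x => Rsqr (uxx x)) I2 /\
    int01 (fun x => indic Om x * Rsqr (wx x)) I3 /\
    int01 (fun x => indic Om x * Rsqr (w x)) I4 /\
    E = am * h * I1 + h ^ 3 * I2 + as_ * sqrt I3 * sqrt I4.

(* Main.v *)
Require Import Defs.
From Stdlib Require Import Reals Lra Lia ClassicalEpsilon.
From Coquelicot Require Import Coquelicot.
Open Scope R_scope.



Definition clamp (y : R) : R := (Rabs y - Rabs (y - 1) + 1) / 2.

Lemma clamp_le0 y : y <= 0 -> clamp y = 0.
Proof. intros; unfold clamp, Rabs; repeat destruct Rcase_abs; lra. Qed.
Lemma clamp_ge1 y : 1 <= y -> clamp y = 1.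
Proof. intros; unfold clamp, Rabs; repeat destruct Rcase_abs; lra. Qed.
Lemma clamp_in y : 0 <= y <= 1 -> clamp y = y.
Proof. intros; unfold clamp, Rabs; repeat destruct Rcase_abs; lra. Qed.
Lemma clamp_bnd y : 0 <= clamp y <= 1.
Proof. unfold clamp, Rabs; repeat destruct Rcase_abs; lra. Qed.

Lemma clamp_cont y : continuity_pt clamp y.
Proof.
  unfold clamp.
  apply continuity_pt_div; [| apply continuity_pt_const; intros a b; reflexivity | lra].
  apply continuity_pt_plus; [| apply continuity_pt_const; intros a b; reflexivity].
  apply continuity_pt_minus; [apply Rcontinuity_abs |].
  apply (continuity_pt_comp (fun y => y - 1) Rabs).
  - apply continuity_pt_minus; [apply continuity_pt_id | apply continuity_pt_const; intros a b; reflexivity].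
  - apply Rcontinuity_abs.
Qed.

Lemma glue (f g h : R -> R) a l d : 0 < d ->
  (forall y, a - d < y <= a -> f y = g y) ->
  (forall y, a <= y < a + d -> f y = h y) ->
  derivable_pt_lim g a l -> derivable_pt_lim h a l -> derivable_pt_lim f a l.
Proof.
  intros Hd Hg Hh Dg Dh eps He.
  destruct (Dg eps He) as [d1 H1]. destruct (Dh eps He) as [d2 H2].
  assert (Hp : 0 < Rmin d (Rmin d1 d2)).
  { apply Rmin_pos; [lra | apply Rmin_pos; apply cond_pos]. }
  exists (mkposreal _ Hp). simpl. intros hh Hh0 Hhh.
  assert (B1 := Rmin_l d (Rmin d1 d2)). assert (B2 := Rmin_r d (Rmin d1 d2)).
  assert (B3 := Rmin_l d1 d2). assert (B4 := Rmin_r d1 d2).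
  assert (Ha := Rabs_def2 _ _ Hhh).
  destruct (Rle_lt_dec hh 0) as [Hneg | Hpos].
  - rewrite (Hg (a + hh)) by lra. rewrite (Hg a) by lra. apply H1; auto; lra.
  - rewrite (Hh (a + hh)) by lra. rewrite (Hh a) by lra. apply H2; auto; lra.
Qed.

Lemma derive_clamp (P P' : R -> R) z :
  (forall t, derivable_pt_lim P t (P' t)) -> P' 0 = 0 -> P' 1 = 0 ->
  derivable_pt_lim (fun y => P (clamp y)) z (P' (clamp z)).
Proof.
  intros HP H0 H1.
  destruct (Rlt_or_le z 0) as [Hz|Hz].
  { rewrite clamp_le0 by lra. rewrite H0.
    apply (glue _ (fun _ => P 0) (fun _ => P 0) z 0 (-z)); try lra;
      try (intros; rewrite clamp_le0 by lra; reflexivity); apply derivable_pt_lim_const. }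
  destruct (Rlt_or_le 1 z) as [Hz1|Hz1].
  { rewrite clamp_ge1 by lra. rewrite H1.
    apply (glue _ (fun _ => P 1) (fun _ => P 1) z 0 (z-1)); try lra;
      try (intros; rewrite clamp_ge1 by lra; reflexivity); apply derivable_pt_lim_const. }
  destruct (Req_dec z 0) as [E0|E0].
  { subst z. rewrite clamp_in by lra.
    apply (glue _ (fun _ => P 0) P 0 (P' 0) 1); try lra.
    - intros; rewrite clamp_le0 by lra; reflexivity.
    - intros; rewrite clamp_in by lra; reflexivity.
    - rewrite H0; apply derivable_pt_lim_const.
    - apply HP. }
  destruct (Req_dec z 1) as [E1|E1].
  { subst z. rewrite clamp_in by lra.
    apply (glue _ P (fun _ => P 1) 1 (P' 1) 1); try lra.
    - intros; rewrite clamp_in by lra; reflexivity.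
    - intros; rewrite clamp_ge1 by lra; reflexivity.
    - apply HP.
    - rewrite H1; apply derivable_pt_lim_const. }
  rewrite clamp_in by lra.
  apply (glue _ P P z (P' z) (Rmin z (1 - z))).
  - apply Rmin_pos; lra.
  - intros y Hy. assert (B := Rmin_l z (1-z)). assert (B' := Rmin_r z (1-z)).
    rewrite clamp_in by lra; reflexivity.
  - intros y Hy. assert (B := Rmin_l z (1-z)). assert (B' := Rmin_r z (1-z)).
    rewrite clamp_in by lra; reflexivity.
  - apply HP.
  - apply HP.
Qed.
Definition tper (c x : R) : R := clamp ((frac_part x - c) / (1 - 2 * c)).

Lemma frac_loc (z : Z) y : IZR z <= y < IZR z + 1 -> frac_part y = y - IZR z.
Proof.
  intros Hy. unfold frac_part, Int_part.
  rewrite <- (up_tech y z) by (try lra; rewrite plus_IZR; simpl; lra).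
  replace (z + 1 - 1)%Z with z by ring. reflexivity.
Qed.

Lemma frac_shift x : frac_part (x + 1) = frac_part x.
Proof.
  destruct (base_Int_part x) as [Ha Hb].
  rewrite (frac_loc (Int_part x + 1)) by (rewrite plus_IZR; simpl; lra).
  unfold frac_part. rewrite plus_IZR. simpl. ring.
Qed.

Lemma tper_shift c x : tper c (x + 1) = tper c x.
Proof. unfold tper. rewrite frac_shift. reflexivity. Qed.

Lemma tper_bnd c x : 0 <= tper c x <= 1.
Proof. apply clamp_bnd. Qed.

Lemma IntP x : IZR (Int_part x) <= x < IZR (Int_part x) + 1.
Proof. destruct (base_Int_part x). lra. Qed.

Lemma lin_der k c a x : a <> 0 -> derivable_pt_lim (fun y => (y - k - c)/a) x (/a).
Proof. intros. apply is_derive_Reals. auto_derive; auto. field; auto. Qed.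

Lemma derive_tper (P P' : R -> R) c :
  0 < c -> c < /2 ->
  (forall t, derivable_pt_lim P t (P' t)) -> P' 0 = 0 -> P' 1 = 0 -> P 0 = P 1 ->
  forall x, derivable_pt_lim (fun x => P (tper c x)) x (P' (tper c x) / (1 - 2 * c)).
Proof.
  intros Hc Hc2 HP H0 H1 E x.
  set (k := IZR (Int_part x)).
  assert (Hk := IntP x). fold k in Hk.
  assert (Hf : frac_part x = x - k) by (apply frac_loc; exact Hk).
  destruct (Req_dec (x - k) 0) as [Z0|Z0].
  - assert (Ht : tper c x = 0).
    { unfold tper. rewrite Hf, Z0. apply clamp_le0.
      unfold Rdiv. rewrite Rmult_comm. apply Rmult_le_0_l; [|lra].
      left; apply Rinv_0_lt_compat; lra. }
    rewrite Ht, H0. replace (0 / (1 - 2 * c)) with 0 by (field; lra).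
    apply (glue _ (fun _ => P 0) (fun _ => P 0) x 0 c); try lra.
    + intros y Hy. destruct (Req_dec y x) as [->|Hyx]; [rewrite Ht; reflexivity|].
      rewrite E. f_equal. unfold tper.
      rewrite (frac_loc (Int_part x - 1)) by (rewrite minus_IZR; fold k; simpl; lra).
      rewrite minus_IZR; fold k. apply clamp_ge1.
      apply (Rmult_le_reg_r (1 - 2*c)); [lra|]. unfold Rdiv. rewrite Rmult_assoc, Rinv_l by lra. lra.
    + intros y Hy. f_equal. unfold tper.
      rewrite (frac_loc (Int_part x)) by (fold k; lra). fold k. apply clamp_le0.
      unfold Rdiv. rewrite Rmult_comm. apply Rmult_le_0_l; [|lra].
      left; apply Rinv_0_lt_compat; lra.
    + apply derivable_pt_lim_const.
    + apply derivable_pt_lim_const.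
  - set (g := fun y => P (clamp ((y - k - c) / (1 - 2 * c)))).
    assert (Hd : 0 < Rmin (x - k) (k + 1 - x)) by (apply Rmin_pos; lra).
    assert (B := Rmin_l (x - k) (k + 1 - x)). assert (B' := Rmin_r (x - k) (k + 1 - x)).
    assert (Heq : forall y, x - Rmin (x - k) (k + 1 - x) < y < x + Rmin (x - k) (k + 1 - x) ->
               P (tper c y) = g y).
    { intros y Hy. unfold g, tper. rewrite (frac_loc (Int_part x)) by (fold k; lra). fold k.
      reflexivity. }
    apply (glue _ g g x _ (Rmin (x - k) (k + 1 - x))); try lra;
      try (intros y Hy; apply Heq; lra).
    all: assert (Ht : tper c x = clamp ((x - k - c) / (1 - 2 * c)))
           by (unfold tper; rewrite Hf; reflexivity);
      rewrite Ht; unfold g;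
      replace (P' (clamp ((x - k - c) / (1 - 2 * c))) / (1 - 2 * c)) with
        ((P' (clamp ((x - k - c) / (1 - 2 * c)))) * (/ (1 - 2 * c))) by (unfold Rdiv; ring);
      apply (derivable_pt_lim_comp (fun y => (y - k - c) / (1 - 2 * c)) (fun y => P (clamp y)));
      [ | apply derive_clamp; auto ].
    all: apply lin_der; lra.
Qed.

Lemma loc_of x d (Q : R -> Prop) : 0 < d -> (forall y, Rabs (y - x) < d -> Q y) -> locally x Q.
Proof.
  intros Hd H. exists (mkposreal d Hd). intros y Hy. apply H. exact Hy.
Qed.

Lemma tper_near_int c x y : 0 < c -> c < /2 -> frac_part x = 0 -> Rabs (y - x) < c ->
  tper c y = 0 \/ tper c y = 1.
Proof.
  intros Hc Hc2 Hf Hy. assert (Ha := Rabs_def2 _ _ Hy).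
  assert (Hk := IntP x). unfold frac_part in Hf.
  set (k := IZR (Int_part x)) in *.
  destruct (Rlt_or_le y x).
  - right. unfold tper.
    rewrite (frac_loc (Int_part x - 1)) by (rewrite minus_IZR; fold k; simpl; lra).
    rewrite minus_IZR; fold k. apply clamp_ge1.
    apply (Rmult_le_reg_r (1 - 2*c)); [lra|]. unfold Rdiv. rewrite Rmult_assoc, Rinv_l by lra. simpl. lra.
  - left. unfold tper.
    rewrite (frac_loc (Int_part x)) by (fold k; lra). fold k. apply clamp_le0.
    unfold Rdiv. rewrite Rmult_comm. apply Rmult_le_0_l; [|lra].
    left; apply Rinv_0_lt_compat; lra.
Qed.

Lemma cont_tper (P : R -> R) c :
  0 < c -> c < /2 -> (forall t, continuity_pt P t) -> P 0 = P 1 ->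
  forall x, continuity_pt (fun x => P (tper c x)) x.
Proof.
  intros Hc Hc2 HP E x.
  set (k := IZR (Int_part x)).
  assert (Hk := IntP x). fold k in Hk.
  assert (Hf : frac_part x = x - k) by (apply frac_loc; exact Hk).
  apply continuity_pt_filterlim. change (continuous (fun x => P (tper c x)) x).
  destruct (Req_dec (x - k) 0) as [Z0|Z0].
  - apply (continuous_ext_loc _ (fun _ => P 0)).
    + apply (loc_of x c); [lra|]. intros y Hy.
      destruct (tper_near_int c x y Hc Hc2) as [H|H]; try lra; rewrite H; auto.
    + apply continuous_const.
  - set (g := fun y => P (clamp ((y - k - c) / (1 - 2 * c)))).
    assert (Hd : 0 < Rmin (x - k) (k + 1 - x)) by (apply Rmin_pos; lra).
    assert (B := Rmin_l (x - k) (k + 1 - x)). assert (B' := Rmin_r (x - k) (k + 1 - x)).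
    apply (continuous_ext_loc _ g).
    + apply (loc_of x _ _ Hd). intros y Hy. assert (Ha := Rabs_def2 _ _ Hy).
      unfold g, tper. rewrite (frac_loc (Int_part x)) by (fold k; lra). fold k. reflexivity.
    + apply continuity_pt_filterlim. unfold g.
      apply (continuity_pt_comp (fun y => clamp ((y - k - c) / (1 - 2 * c))) P); [|apply HP].
      apply (continuity_pt_comp (fun y => (y - k - c) / (1 - 2 * c)) clamp); [|apply clamp_cont].
      apply derivable_continuous_pt. exists (/ (1 - 2 * c)). apply lin_der. lra.
Qed.

Lemma frac01 x : 0 <= x < 1 -> frac_part x = x.
Proof. intros. rewrite (frac_loc 0) by (simpl; lra). simpl. ring. Qed.

Lemma int_tper (G : R -> R) c v :
  0 < c -> c < /2 -> is_RInt G 0 1 v ->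
  is_RInt (fun x => G (tper c x)) 0 1 (c * G 0 + (1 - 2 * c) * v + c * G 1).
Proof.
  intros Hc Hc2 HG.
  assert (H1 : is_RInt (fun x => G (tper c x)) 0 c (c * G 0)).
  { apply (is_RInt_ext (fun _ => G 0)).
    - intros x Hx. rewrite Rmin_left in Hx by lra. rewrite Rmax_right in Hx by lra.
      unfold tper. rewrite frac01 by lra. rewrite clamp_le0; [reflexivity|].
      unfold Rdiv. rewrite Rmult_comm. apply Rmult_le_0_l; [|lra].
      left; apply Rinv_0_lt_compat; lra.
    - replace (c * G 0) with (scal (c - 0) (G 0)) by (unfold scal; simpl; unfold mult; simpl; ring).
      apply (@is_RInt_const R_NormedModule). }
  assert (H3 : is_RInt (fun x => G (tper c x)) (1 - c) 1 (c * G 1)).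
  { apply (is_RInt_ext (fun _ => G 1)).
    - intros x Hx. rewrite Rmin_left in Hx by lra. rewrite Rmax_right in Hx by lra.
      unfold tper. rewrite frac01 by lra. rewrite clamp_ge1; [reflexivity|].
      apply (Rmult_le_reg_r (1 - 2*c)); [lra|]. unfold Rdiv. rewrite Rmult_assoc, Rinv_l by lra. lra.
    - replace (c * G 1) with (scal (1 - (1 - c)) (G 1)) by (unfold scal; simpl; unfold mult; simpl; ring).
      apply (@is_RInt_const R_NormedModule). }
  assert (H2 : is_RInt (fun x => G (tper c x)) c (1 - c) ((1 - 2 * c) * v)).
  { assert (HL : 1 - 2 * c <> 0) by lra.
    assert (HG' : is_RInt G (/ (1 - 2 * c) * c + - c / (1 - 2 * c)) (/ (1 - 2 * c) * (1 - c) + - c / (1 - 2 * c)) v).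
    { replace (/ (1 - 2 * c) * c + - c / (1 - 2 * c)) with 0 by (field; lra).
      replace (/ (1 - 2 * c) * (1 - c) + - c / (1 - 2 * c)) with 1 by (field; lra).
      exact HG. }
    assert (Hc' := is_RInt_comp_lin G _ _ c (1 - c) v HG').
    assert (Hc'' := is_RInt_scal _ _ _ (1 - 2 * c) _ Hc').
    refine (is_RInt_ext _ _ _ _ _ _ Hc'').
    intros x Hx. rewrite Rmin_left in Hx by lra. rewrite Rmax_right in Hx by lra.
    unfold scal; simpl; unfold mult; simpl.
    unfold tper. rewrite frac01 by lra.
    assert (Hin : 0 <= (x - c) / (1 - 2 * c) <= 1).
    { split.
      -- unfold Rdiv. apply Rmult_le_pos; [lra|]. left; apply Rinv_0_lt_compat; lra.
      -- apply (Rmult_le_reg_r (1 - 2*c)); [lra|]. unfold Rdiv. rewrite Rmult_assoc, Rinv_l by lra. lra. }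
    rewrite (clamp_in _ Hin).
    replace (/ (1 - 2 * c) * x + - c / (1 - 2 * c)) with ((x - c) / (1 - 2 * c)) by (field; lra).
    field. lra. }
  assert (H := is_RInt_Chasles _ _ _ _ _ _ (is_RInt_Chasles _ _ _ _ _ _ H1 H2) H3).
  exact H.
Qed.
Lemma int01_of f I : is_RInt f 0 1 I -> int01 f I.
Proof. intros H. exists (ex_RInt_Reals_0 f 0 1 (ex_intro _ I H)). rewrite <- RInt_Reals. apply is_RInt_unique; auto. Qed.



Lemma derive_tperQ (P Q : R -> R) c : 0 < c -> c < /2 ->
  (forall t, derivable_pt_lim P t ((1 - 2 * c) * Q t)) -> Q 0 = 0 -> Q 1 = 0 -> P 0 = P 1 ->
  forall x, derivable_pt_lim (fun x => P (tper c x)) x (Q (tper c x)).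
Proof.
  intros Hc Hc2 HP H0 H1 E x.
  replace (Q (tper c x)) with ((1 - 2 * c) * Q (tper c x) / (1 - 2 * c)) by (field; lra).
  apply (derive_tper P (fun t => (1 - 2 * c) * Q t)); auto; [rewrite H0 | rewrite H1]; ring.
Qed.

Lemma cont_of_der (f f' : R -> R) : (forall t, derivable_pt_lim f t (f' t)) -> forall t, continuity_pt f t.
Proof. intros H t. apply derivable_continuous_pt. exists (f' t). apply H. Qed.

Definition Ub (A t : R) := A * (t * (1 - t)) ^ 3.
Definition Ubp (A t : R) := 3 * A * (t * (1 - t)) ^ 2 * (1 - 2 * t).
Definition Ubpp (A t : R) := A * (6 * t - 36 * t ^ 2 + 60 * t ^ 3 - 30 * t ^ 4).
Definition chi (n : nat) (t : R) := 1 - (1 - 2 * t) ^ (2 * n).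
Definition Xf (n : nat) (t : R) := t + ((1 - 2 * t) ^ (S (2 * n)) - 1) / (2 * (2 * INR n + 1)).
Definition rho (t : R) := t^5/5 - 4*t^6/3 + 26*t^7/7 - 11*t^8/2 + 41*t^9/9 - 2*t^10 + 4*t^11/11.
Definition Sf (t : R) := 12*t^3 - 108*t^4 + 2016/5*t^5 - 780*t^6 + 5760/7*t^7 - 450*t^8 + 100*t^9.
Definition Fu (A L t : R) := Ubp A t / L.
Definition Fuu (A L t : R) := Ubpp A t / (L * L).
Definition Fw (eta : R) (n : nat) (A L t : R) := eta * chi n t - / 2 * Rsqr (Fu A L t).
Definition Wf (eta : R) (n : nat) (A L t : R) := L * eta * Xf n t - 9 * A ^ 2 * rho t / (2 * L).

Lemma d_Ub A L t : L <> 0 -> derivable_pt_lim (Ub A) t (L * Fu A L t).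
Proof. intros HL. apply is_derive_Reals. unfold Ub, Fu, Ubp. auto_derive; auto. field; auto. Qed.

Lemma d_Fu A L t : L <> 0 -> derivable_pt_lim (Fu A L) t (L * Fuu A L t).
Proof. intros HL. apply is_derive_Reals. unfold Fuu, Fu, Ubp, Ubpp. auto_derive; auto. field; auto. Qed.

Lemma d_Fuu A L t : L <> 0 -> derivable_pt_lim (Fuu A L) t (A * (6 - 72 * t + 180 * t^2 - 120 * t^3) / (L * L)).
Proof. intros HL. apply is_derive_Reals. unfold Fuu, Ubpp. auto_derive; [split; auto|]. field; auto. Qed.

Lemma d_Xf n t : derivable_pt_lim (Xf n) t (chi n t).
Proof.
  apply is_derive_Reals. unfold Xf, chi. auto_derive.
  - assert (0 <= INR n) by apply pos_INR. lra.
  - change (1 + - (2*1) * (INR (S (2*n)) * (1 + - (2*t))^(2*n)) * / (2*(2*INR n+1)) = 1 - (1 - 2 * t) ^ (2 * n)).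
    rewrite S_INR, mult_INR. simpl. replace (1 + - (2*t)) with (1 - 2*t) by ring.
    field. assert (0 <= INR n) by apply pos_INR. lra.
Qed.

Lemma d_rho t : derivable_pt_lim rho t ((t * (1 - t)) ^ 4 * (1 - 2 * t) ^ 2).
Proof. apply is_derive_Reals. unfold rho. auto_derive; auto. field. Qed.

Lemma d_Wf eta n A L t : L <> 0 -> derivable_pt_lim (Wf eta n A L) t (L * Fw eta n A L t).
Proof.
  intros HL. unfold Wf.
  replace (L * Fw eta n A L t) with (L * eta * chi n t - 9 * A ^ 2 * ((t * (1 - t)) ^ 4 * (1 - 2 * t) ^ 2) / (2 * L)).
  2:{ unfold Fw, Fu, Ubp, Rsqr. field; auto. }
  apply derivable_pt_lim_minus.
  - apply derivable_pt_lim_scal. apply d_Xf.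
  - apply derivable_pt_lim_div_scal. apply derivable_pt_lim_scal. apply d_rho.
Qed.

Lemma d_poly_cont (f : R -> R) (f' : R -> R) : (forall t, derivable_pt_lim f t (f' t)) -> forall t, continuity_pt f t.
Proof. apply cont_of_der. Qed.



Definition OmS (c x : R) : Prop := tper c x * (1 - tper c x) = 0.

Lemma is_RInt_zero a b : is_RInt (fun _ => 0) a b 0.
Proof.
  assert (H := @is_RInt_const R_NormedModule a b 0).
  replace (scal (b - a) (0:R_NormedModule)) with 0 in H by (unfold scal; simpl; unfold mult; simpl; ring).
  exact H.
Qed.

Lemma Om_ok c : 0 < c -> c < /2 ->
  periodic1_set (OmS c) /\ Defs.closed_set (OmS c) /\ int01 (indic (OmS c)) (2 * c).
Proof.
  intros Hc Hc2. split; [|split].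
  - intros x. unfold OmS. rewrite tper_shift. tauto.
  - intros x Hx.
    assert (Hd : forall t, derivable_pt_lim (fun t => t * (1 - t)) t (1 - 2 * t)).
    { intros t. apply is_derive_Reals. auto_derive; auto. ring. }
    assert (Hm := cont_tper (fun t => t * (1 - t)) c Hc Hc2
                   (d_poly_cont _ _ Hd) ltac:(cbv beta; ring) x).
    unfold OmS in *. set (m := tper c x * (1 - tper c x)) in *.
    unfold continuity_pt, continue_in, limit1_in, limit_in in Hm.
    destruct (Hm (Rabs m) (Rabs_pos_lt _ Hx)) as [alp [Halp H]].
    exists alp. split; auto. intros y Hy Hmy.
    destruct (Req_dec y x) as [->|Hyx]; [contradiction|].
    specialize (H y). simpl in H. unfold R_dist in H.
    assert (H' := H (conj (conj I (not_eq_sym Hyx)) Hy)). rewrite Hmy in H'.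
    fold m in H'. rewrite Rminus_0_l, Rabs_Ropp in H'. lra.
  - apply int01_of.
    set (G := indic (fun t => t * (1 - t) = 0)).
    assert (HG : is_RInt G 0 1 0).
    { apply (is_RInt_ext (fun _ => 0)); [|apply is_RInt_zero].
      intros t Ht. rewrite Rmin_left in Ht by lra. rewrite Rmax_right in Ht by lra.
      unfold G, indic. destruct (excluded_middle_informative _) as [E|E]; [|reflexivity].
      exfalso. assert (0 < t * (1 - t)) by nra. lra. }
    assert (H := int_tper G c 0 Hc Hc2 HG).
    assert (G0 : G 0 = 1) by (unfold G, indic; destruct (excluded_middle_informative _); [reflexivity| exfalso; apply n; ring]).
    assert (G1 : G 1 = 1) by (unfold G, indic; destruct (excluded_middle_informative _); [reflexivity| exfalso; apply n; ring]).
    rewrite G0, G1 in H. replace (2 * c) with (c * 1 + (1 - 2 * c) * 0 + c * 1) by ring.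
    exact H.
Qed.



Lemma chi0 n : chi n 0 = 0.
Proof. unfold chi. replace (1 - 2 * 0) with 1 by ring. rewrite pow1. ring. Qed.
Lemma chi1 n : chi n 1 = 0.
Proof. unfold chi. replace (1 - 2 * 1) with (-1) by ring. rewrite pow_1_even. ring. Qed.
Lemma Fu0 A L : Fu A L 0 = 0.
Proof. unfold Fu, Ubp. unfold Rdiv. ring. Qed.
Lemma Fu1 A L : Fu A L 1 = 0.
Proof. unfold Fu, Ubp. unfold Rdiv. ring. Qed.
Lemma Fuu0 A L : Fuu A L 0 = 0.
Proof. unfold Fuu, Ubpp. unfold Rdiv. ring. Qed.
Lemma Fuu1 A L : Fuu A L 1 = 0.
Proof. unfold Fuu, Ubpp. unfold Rdiv. ring. Qed.
Lemma Fw0 eta n A L : Fw eta n A L 0 = 0.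
Proof. unfold Fw. rewrite chi0, Fu0. unfold Rsqr. ring. Qed.
Lemma Fw1 eta n A L : Fw eta n A L 1 = 0.
Proof. unfold Fw. rewrite chi1, Fu1. unfold Rsqr. ring. Qed.
Lemma Ub0 A : Ub A 0 = 0.
Proof. unfold Ub. ring. Qed.
Lemma Ub1 A : Ub A 1 = 0.
Proof. unfold Ub. ring. Qed.
Lemma Xf0 n : Xf n 0 = 0.
Proof. unfold Xf. replace (1 - 2 * 0) with 1 by ring. rewrite pow1. unfold Rdiv. ring. Qed.
Lemma Xf1 n : Xf n 1 = 2 * INR n / (2 * INR n + 1).
Proof.
  unfold Xf. replace (1 - 2 * 1) with (-1) by ring. rewrite pow_1_odd.
  field. assert (0 <= INR n) by apply pos_INR. lra.
Qed.
Lemma rho0 : rho 0 = 0.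
Proof. unfold rho. field. Qed.
Lemma rho1 : rho 1 = / 6930.
Proof. unfold rho. field. Qed.
Lemma Wf0 eta n A L : L <> 0 -> Wf eta n A L 0 = 0.
Proof. intros. unfold Wf. rewrite Xf0, rho0. field; auto. Qed.

Definition Afor (eta : R) (n : nat) (L : R) := sqrt (2 * L ^ 2 * eta * (2 * INR n / (2 * INR n + 1)) * 6930 / 9).

Lemma Afor_sq eta n L : 0 < eta -> L <> 0 -> (Afor eta n L) ^ 2 = 2 * L ^ 2 * eta * (2 * INR n / (2 * INR n + 1)) * 6930 / 9.
Proof.
  intros He HL. unfold Afor. rewrite <- Rsqr_pow2. apply Rsqr_sqrt.
  assert (0 <= INR n) by apply pos_INR.
  assert (0 <= 2 * INR n / (2 * INR n + 1)) by (apply Rmult_le_pos; [lra| left; apply Rinv_0_lt_compat; lra]).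
  assert (0 <= L ^ 2) by apply pow2_ge_0.
  set (q := 2 * INR n / (2 * INR n + 1)) in *. set (L2 := L ^ 2) in *. clearbody q L2.
  unfold Rdiv. repeat apply Rmult_le_pos; try lra; left; apply Rinv_0_lt_compat; lra.
Qed.

Lemma Wf1 eta n L : 0 < eta -> L <> 0 -> Wf eta n (Afor eta n L) L 1 = 0.
Proof.
  intros He HL. unfold Wf. rewrite Xf1, rho1, Afor_sq by auto.
  field. split; auto. assert (0 <= INR n) by apply pos_INR. lra.
Qed.

Lemma int_I1 eta m : is_RInt (fun t => eta ^ 2 * (1 - 2 * t) ^ (2 * m)) 0 1 (eta ^ 2 / (2 * INR m + 1)).
Proof.
  assert (Hm : 0 <= INR m) by apply pos_INR.
  set (F := fun t => - eta ^ 2 * (1 - 2 * t) ^ (S (2 * m)) / (2 * (2 * INR m + 1))).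
  assert (HD : forall t, is_derive F t (eta ^ 2 * (1 - 2 * t) ^ (2 * m))).
  { intros t. unfold F. auto_derive; [lra|].
    change (- (eta * (eta * 1)) * (- (2 * 1) * (INR (S (2*m)) * (1 + - (2 * t)) ^ (2*m))) * / (2 * (2 * INR m + 1)) = eta ^ 2 * (1 - 2 * t) ^ (2 * m)).
    rewrite S_INR, mult_INR. simpl. replace (1 + - (2*t)) with (1 - 2*t) by ring. field. lra. }
  assert (HC : forall t, continuous (fun t => eta ^ 2 * (1 - 2 * t) ^ (2 * m)) t).
  { intros t. apply continuity_pt_filterlim. reg. }
  assert (H := is_RInt_derive F (fun t => eta ^ 2 * (1 - 2 * t) ^ (2 * m)) 0 1 (fun t _ => HD t)
                 (fun t _ => HC t)).
  replace (eta ^ 2 / (2 * INR m + 1)) with (minus (F 1) (F 0)). exact H.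
  unfold minus, plus, opp; simpl. unfold F.
  replace (1 - 2 * 1) with (-1) by ring. replace (1 - 2 * 0) with 1 by ring.
  rewrite pow_1_odd, pow1. field. lra.
Qed.

Lemma G1_eq eta n A L t :
  Rsqr (Fw eta n A L t + / 2 * Rsqr (Fu A L t) - eta) = eta ^ 2 * (1 - 2 * t) ^ (2 * (2 * n)).
Proof.
  unfold Fw, chi. replace (2 * (2 * n))%nat with (2 * n + 2 * n)%nat by lia.
  rewrite pow_add. unfold Rsqr. ring.
Qed.

Lemma int_I2 A L : L <> 0 ->
  is_RInt (fun t => Rsqr (Fuu A L t)) 0 1 (A ^ 2 / (L * L) ^ 2 * (2 / 35)).
Proof.
  intros HL.
  set (F := fun t => A ^ 2 / (L * L) ^ 2 * Sf t).
  assert (HD : forall t, is_derive F t (Rsqr (Fuu A L t))).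
  { intros t. unfold F, Sf, Fuu, Ubpp, Rsqr. auto_derive; auto. field. auto. }
  assert (HC : forall t, continuous (fun t => Rsqr (Fuu A L t)) t).
  { intros t. apply continuity_pt_filterlim. unfold Fuu, Ubpp, Rsqr. reg. }
  assert (H := is_RInt_derive F _ 0 1 (fun t _ => HD t) (fun t _ => HC t)).
  replace (A ^ 2 / (L * L) ^ 2 * (2 / 35)) with (minus (F 1) (F 0)). exact H.
  unfold minus, plus, opp; simpl. unfold F, Sf. field. auto.
Qed.



Lemma is_RInt_constR a b v : is_RInt (fun _ => v) a b ((b - a) * v).
Proof.
  assert (H := @is_RInt_const R_NormedModule a b v).
  replace (scal (b - a) (v:R_NormedModule)) with ((b - a) * v) in H by (unfold scal; simpl; unfold mult; simpl; ring).
  exact H.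
Qed.

Lemma zero_on_Om c (F : R -> R) x : F 0 = 0 -> F 1 = 0 ->
  indic (OmS c) x * Rsqr (F (tper c x)) = 0.
Proof.
  intros H0 H1. unfold indic. destruct (excluded_middle_informative _) as [E|E]; [|ring].
  unfold OmS in E. apply Rmult_integral in E. destruct E as [E|E].
  - rewrite E, H0. unfold Rsqr. ring.
  - replace (tper c x) with 1 by lra. rewrite H1. unfold Rsqr. ring.
Qed.

Lemma int01_zero (f : R -> R) : (forall x, f x = 0) -> int01 f 0.
Proof.
  intros H. apply int01_of. apply (is_RInt_ext (fun _ => 0)); [|apply is_RInt_zero].
  intros; rewrite H; reflexivity.
Qed.

Import Defs.

Theorem theorem1 :
  exists K2 : R, 0 < K2 /\
    forall am theta h as_ eta : R,
      0 < am -> 0 < theta -> theta < 1 -> 0 < h -> 0 < as_ -> 0 < eta ->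
      forall eps : R, 0 < eps ->
        exists (w wx u ux uxx : R -> R) (Om : R -> Prop) (E : R),
          admissible theta w wx u ux uxx Om /\
          energy_value am h as_ eta w wx u ux uxx Om E /\
          E <= Rmin (am * eta ^ 2)
                    (am * eta ^ 2 * theta + K2 * (h ^ 2 * eta / (1 - theta))) * h
               + eps.
Proof.
  exists 88. split; [lra|].
  intros am theta h as_ eta Ham Hth0 Hth1 Hh Has He eps Heps.
  set (c := theta / 2).
  assert (Hc : 0 < c) by (unfold c; lra).
  assert (Hc2 : c < / 2) by (unfold c; lra).
  assert (Htc : theta = 2 * c) by (unfold c; field).
  destruct (Om_ok c Hc Hc2) as [Op [Ocl Oint]].
  rewrite <- Htc in Oint.
  destruct (Rle_or_lt (am * eta ^ 2) (am * eta ^ 2 * theta + 88 * (h ^ 2 * eta / (1 - theta)))) as [Hmin|Hmin].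
  -
    exists (fun _ => 0), (fun _ => 0), (fun _ => 0), (fun _ => 0), (fun _ => 0), (OmS c),
      (am * h * eta ^ 2 + h ^ 3 * 0 + as_ * sqrt 0 * sqrt 0).
    split; [|split].
    + unfold admissible.
      repeat match goal with |- _ /\ _ => split end; auto; try (intros x; reflexivity); try (intros x; apply derivable_pt_lim_const);
        try (intros x; apply continuity_pt_const; intros a b; reflexivity); try (intros; lra).
    + unfold energy_value. exists (eta ^ 2), 0, 0, 0. repeat match goal with |- _ /\ _ => split end.
      * apply int01_of. apply (is_RInt_ext (fun _ => eta ^ 2)).
        -- intros x _. assert (Hx : eta ^ 2 = Rsqr (0 + / 2 * Rsqr 0 - eta)) by (unfold Rsqr; ring). exact Hx.
        -- assert (H := is_RInt_constR 0 1 (eta ^ 2)). replace ((1 - 0) * eta ^ 2) with (eta ^ 2) in H by ring. exact H.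
      * apply int01_of. apply (is_RInt_ext (fun _ => 0)); [intros x _; assert (Hx : 0 = Rsqr 0) by (unfold Rsqr; ring); exact Hx | apply is_RInt_zero].
      * apply int01_zero. intros x. exact (zero_on_Om c (fun _ => 0) x eq_refl eq_refl).
      * apply int01_zero. intros x. exact (zero_on_Om c (fun _ => 0) x eq_refl eq_refl).
          * reflexivity.
    + rewrite Rmin_left by exact Hmin. rewrite sqrt_0. lra.
  -
    assert (Hp : 0 < eps / (am * h * eta ^ 2)).
    { apply Rdiv_lt_0_compat; auto. apply Rmult_lt_0_compat; [nra|]. apply pow_lt; auto. }
    destruct (archimed_cor1 _ Hp) as [N [HN HN0]].
    set (L := 1 - 2 * c).
    assert (HL : L <> 0) by (unfold L; lra).
    assert (HL0 : 0 < L) by (unfold L; lra).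
    set (A := Afor eta N L).
    set (v1 := eta ^ 2 / (2 * INR (2 * N) + 1)).
    set (G1 := fun t => Rsqr (Fw eta N A L t + / 2 * Rsqr (Fu A L t) - eta)).
    set (v2 := A ^ 2 / (L * L) ^ 2 * (2 / 35)).
    set (G2 := fun t => Rsqr (Fuu A L t)).
    exists (fun x => Wf eta N A L (tper c x)), (fun x => Fw eta N A L (tper c x)),
      (fun x => Ub A (tper c x)), (fun x => Fu A L (tper c x)), (fun x => Fuu A L (tper c x)), (OmS c),
      (am * h * (c * G1 0 + L * v1 + c * G1 1) + h ^ 3 * (c * G2 0 + L * v2 + c * G2 1)
       + as_ * sqrt 0 * sqrt 0).
    split; [|split].
    + unfold admissible. split; [|split; [|split; [|split; [|split; [|split; [|split; [|split; [|split; [|split; [|split]]]]]]]]]].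
      * intros x. rewrite tper_shift. reflexivity.
      * intros x. rewrite tper_shift. reflexivity.
      * apply derive_tperQ; auto.
        -- intros t. apply d_Wf. exact HL.
        -- apply Fw0.
        -- apply Fw1.
        -- rewrite Wf0 by exact HL. unfold A. rewrite Wf1 by auto. reflexivity.
      * intros x. apply cont_tper; auto.
        -- intros t. unfold Fw, chi, Fu, Ubp, Rsqr. reg.
        -- rewrite Fw0, Fw1. reflexivity.
      * apply derive_tperQ; auto.
        -- intros t. apply d_Ub. exact HL.
        -- apply Fu0.
        -- apply Fu1.
        -- rewrite Ub0, Ub1. reflexivity.
      * apply derive_tperQ; auto.
        -- intros t. apply d_Fu. exact HL.
        -- apply Fuu0.
        -- apply Fuu1.
        -- rewrite Fu0, Fu1. reflexivity.
      * intros x. apply cont_tper; auto.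
        -- intros t. unfold Fuu, Ubpp. reg.
        -- rewrite Fuu0, Fuu1. reflexivity.
      * intros x. unfold Ub. destruct (tper_bnd c x) as [T0 T1].
        assert (0 <= A) by (unfold A, Afor; apply sqrt_pos).
        apply Rmult_le_pos; auto. apply pow_le. nra.
      * exact Op.
      * exact Ocl.
      * exact Oint.
      * intros x Hx. unfold OmS in Hx. unfold Ub. rewrite Hx. ring.
    + unfold energy_value. exists (c * G1 0 + L * v1 + c * G1 1), (c * G2 0 + L * v2 + c * G2 1), 0, 0.
      split; [|split; [|split; [|split]]].
      * apply int01_of. apply (int_tper G1 c v1 Hc Hc2).
        apply (is_RInt_ext (fun t => eta ^ 2 * (1 - 2 * t) ^ (2 * (2 * N)))).
        -- intros t _. unfold G1. rewrite G1_eq. reflexivity.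
        -- apply int_I1.
      * apply int01_of. apply (int_tper G2 c v2 Hc Hc2). apply int_I2. exact HL.
      * apply int01_zero. intros x. apply (zero_on_Om c (Fw eta N A L) x); [apply Fw0 | apply Fw1].
      * apply int01_zero. intros x. apply (zero_on_Om c (Wf eta N A L) x).
        -- apply Wf0. exact HL.
        -- unfold A. apply Wf1; auto.
      * reflexivity.
    + assert (G10 : G1 0 = eta ^ 2) by (unfold G1; rewrite Fw0, Fu0; unfold Rsqr; ring).
      assert (G11 : G1 1 = eta ^ 2) by (unfold G1; rewrite Fw1, Fu1; unfold Rsqr; ring).
      assert (G20 : G2 0 = 0) by (unfold G2; rewrite Fuu0; unfold Rsqr; ring).
      assert (G21 : G2 1 = 0) by (unfold G2; rewrite Fuu1; unfold Rsqr; ring).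
      rewrite G10, G11, G20, G21, sqrt_0.
      rewrite Rmin_right by lra.
      assert (HnN : 1 <= INR N) by (change 1 with (INR 1); apply le_INR; lia).
      set (q := 2 * INR N / (2 * INR N + 1)).
      assert (Hq : q <= 1).
      { unfold q. apply (Rmult_le_reg_r (2 * INR N + 1)); [lra|].
        unfold Rdiv. rewrite Rmult_assoc, Rinv_l by lra. lra. }
      assert (Hq0 : 0 <= q).
      { unfold q. apply Rmult_le_pos; [lra|]. left; apply Rinv_0_lt_compat; lra. }
      assert (EV2 : L * v2 = 88 * eta * q / L).
      { unfold v2, A. rewrite Afor_sq by auto. fold q. field. auto. }
      assert (EV1 : L * v1 = L * eta ^ 2 / (4 * INR N + 1)).
      { unfold v1. rewrite mult_INR. simpl. field. lra. }
      assert (H1L : 1 - theta = L) by (unfold L; lra).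
      rewrite H1L, EV1, EV2.
      set (X := am * h * eta ^ 2) in *.
      assert (HX : 0 < X) by (unfold X; apply Rmult_lt_0_compat; [nra| apply pow_lt; auto]).
      assert (HXN : X < eps * INR N).
      { assert (H := HN). apply (Rmult_lt_compat_r (X * INR N)) in H; [|nra].
        replace (/ INR N * (X * INR N)) with X in H by (field; lra).
        replace (eps / X * (X * INR N)) with (eps * INR N) in H by (field; lra). exact H. }
      assert (P1 : am * h * (L * eta ^ 2 / (4 * INR N + 1)) <= eps).
      { replace (am * h * (L * eta ^ 2 / (4 * INR N + 1))) with (X * L / (4 * INR N + 1))
          by (unfold X; field; lra).
        apply (Rmult_le_reg_r (4 * INR N + 1)); [lra|].
        unfold Rdiv. rewrite Rmult_assoc, Rinv_l by lra. nra. }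
      assert (P2 : h ^ 3 * (88 * eta * q / L) <= 88 * (h ^ 2 * eta / L) * h).
      { replace (88 * (h ^ 2 * eta / L) * h) with (h ^ 3 * (88 * eta * 1 / L)) by (field; auto).
        apply Rmult_le_compat_l; [left; apply pow_lt; auto|].
        unfold Rdiv. apply Rmult_le_compat_r; [left; apply Rinv_0_lt_compat; auto|].
        apply Rmult_le_compat_l; lra. }
      rewrite Htc. lra.
Qed.
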